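(* Let $p,q$ be nonzero elements of $D$. Then the matrix $\begin{pmatrix} p & q\\ 0 & 0\end{pmatrix}$ is a product of idempotent $2\times 2$ matrices over $D$ if one of the following holds: (i) $\deg p\ge\deg q$, and either $q(u)>0$ for every real root $u$ of $p$, or $q(u)<0$ for every real root $u$ of $p$; (ii) $\deg q\ge\deg p$, and either $p(z)>0$ for every real root $z$ of $q$, or $p(z)<0$ for every real root $z$ of $q$.
   Context: $D$ denotes the minimal Dress ring of the field $\mathbb{R}(X)$, i.e. the subring of $\mathbb{R}(X)$ generated by $\mathbb{Z}$ and all elements $1/(1+h^2)$ with $h\in\mathbb{R}(X)$; its elements are the rational functions $f/\gamma$ with $f,\gamma\in\mathbb{R}[X]$, $\gamma$ without real roots and $\deg f\le\deg\gamma$. For a rational function $f/g$ ($f,g\in\mathbb{R}[X]$) its degree is $\deg(f/g)=\deg f-\deg g$, and its real roots are the real numbers where it vanishes (for elements of $D$, the real roots of the numerator in reduced form). A matrix $E$ is idempotent if $E^2=E$. *)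

(* Defs.v *)
(* The real field R(X) is modelled as {fraction {poly R}}
   over an arbitrary real closed field R (covers R = the reals). *)
From HB Require Import structures.
From mathcomp Require Import all_boot all_order all_algebra.
Set Implicit Arguments. Unset Strict Implicit. Unset Printing Implicit Defensive.
Import Order.TTheory GRing.Theory Num.Theory.
Local Open Scope ring_scope.

Definition no_real_root (R : rcfType) (g : {poly R}) : Prop :=
  forall x : R, ~~ root g x.

Notation RX R := {fraction {poly R}}.

(* membership in the minimal Dress ring D of R(X):
   x = f/g with g without real roots and deg f <= deg g *)
Definition inD (R : rcfType) (x : RX R) : Prop :=
  exists (f g : {poly R}), [/\ g != 0, no_real_root g, (size f <= size g)%N
                            & x = (tofrac f) / (tofrac g)].

Definition rdeg (R : rcfType) (f g : {poly R}) : int :=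
  ((size f).-1)%:Z - ((size g).-1)%:Z.

Definition reval (R : rcfType) (f g : {poly R}) (u : R) : R := f.[u] / g.[u].

Definition mxD (R : rcfType) (A : 'M[RX R]_2) : Prop := forall i j, inD (A i j).

Definition idempotent_mx (K : pzRingType) (n : nat) (E : 'M[K]_n) : Prop :=
  E *m E = E.

Definition prod_idem_D (R : rcfType) (A : 'M[RX R]_2) : Prop :=
  exists s : seq 'M[RX R]_2,
    (forall E, E \in s -> mxD E /\ idempotent_mx E) /\
    A = foldr (fun E B => E *m B) 1%:M s.

(* Main.v *)
Require Import Defs.
From HB Require Import structures.
From mathcomp Require Import all_boot all_order all_algebra.
From mathcomp Require Import ring lra zify.
From Stdlib Require Import Classical.
Set Implicit Arguments. Unset Strict Implicit. Unset Printing Implicit Defensive.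
Import Order.TTheory GRing.Theory Num.Theory.
Local Open Scope ring_scope.

Section Mat.
Variable R : rcfType.
Local Notation K := (RX R).

Definition mk2 (x y z w : K) : 'M[K]_2 :=
  \matrix_(i < 2, j < 2) if i == 0 then (if j == 0 then x else y)
                         else (if j == 0 then z else w).

Lemma mul_mk2 x y z w x' y' z' w' :
  mk2 x y z w *m mk2 x' y' z' w' =
  mk2 (x * x' + y * z') (x * y' + y * w') (z * x' + w * z') (z * y' + w * w').
Proof.
apply/matrixP => i j; rewrite !mxE !big_ord_recr big_ord0 /= !mxE add0r.
by case: i => [[|[|//]] Hi]; case: j => [[|[|//]] Hj].
Qed.

Lemma mk2_1 : (1%:M : 'M[K]_2) = mk2 1 0 0 1.
Proof.
apply/matrixP => i j; rewrite !mxE /=.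
by case: i => [[|[|//]] Hi]; case: j => [[|[|//]] Hj].
Qed.

Lemma mk2_eq x y z w x' y' z' w' :
  x = x' -> y = y' -> z = z' -> w = w' -> mk2 x y z w = mk2 x' y' z' w'.
Proof. by move=> -> -> -> ->. Qed.

Lemma inD0 : inD (0 : K).
Proof.
exists 0, 1; split.
- by rewrite oner_neq0.
- by move=> x; rewrite /root hornerC oner_neq0.
- by rewrite size_poly0.
- by rewrite tofrac0 mul0r.
Qed.

Lemma inD1 : inD (1 : K).
Proof.
exists 1, 1; split.
- by rewrite oner_neq0.
- by move=> x; rewrite /root hornerC oner_neq0.
- exact: leqnn.
- by rewrite tofrac1 divr1.
Qed.

Lemma inD1B (a : K) : inD a -> inD (1 - a).
Proof.
case=> f [g [g0 ng sfg ->]].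
exists (g - f), g; split.
- exact: g0.
- exact: ng.
- by rewrite (leq_trans (size_add _ _)) // size_opp geq_max leqnn.
- have gF : tofrac g != 0 by rewrite tofrac_eq0.
  by rewrite tofracB mulrBl divff.
Qed.
Lemma mxD_mk2 x y z w : inD x -> inD y -> inD z -> inD w -> mxD (mk2 x y z w).
Proof.
move=> *; move=> i j; rewrite !mxE.
by case: i => [[|[|//]] Hi]; case: j => [[|[|//]] Hj].
Qed.

Lemma assemble (mu a b c : K) : inD mu -> inD a -> inD b -> inD c ->
  b * c = a * (1 - a) ->
  prod_idem_D (mk2 (mu * a) (mu * b) 0 0) /\ prod_idem_D (mk2 (mu * b) (mu * a) 0 0).
Proof.
move=> Dm Da Db Dc Ebc; have D0 := inD0; have D1 := inD1; have D1a := inD1B Da.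
have Ecb : c * b = a * (1 - a) by rewrite mulrC.
split.
- exists [:: mk2 1 0 0 0; mk2 0 mu 0 1; mk2 1 0 1 0; mk2 a b c (1 - a)]; split.
  + move=> E; rewrite !inE => /or4P [] /eqP -> ; split; try exact: mxD_mk2;
    rewrite /idempotent_mx mul_mk2; apply: mk2_eq;
    first [ring | rewrite Ebc; ring | rewrite Ecb; ring].
  + rewrite /= mk2_1 !mul_mk2; apply: mk2_eq; ring.
- exists [:: mk2 1 1 0 0; mk2 0 0 0 1; mk2 1 0 mu 0; mk2 0 1 0 1; mk2 (1 - a) c b a]; split.
  + move=> E; rewrite !inE => /orP [/eqP ->|/or4P [] /eqP ->]; split; try exact: mxD_mk2;
    rewrite /idempotent_mx mul_mk2; apply: mk2_eq;
    first [ring | rewrite Ebc; ring | rewrite Ecb; ring].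
  + rewrite /= mk2_1 !mul_mk2; apply: mk2_eq; ring.
Qed.

Lemma target_eq (P Q : K) :
  (\matrix_(i < 2, j < 2) (if i == 0 then (if j == 0 then P else Q) else 0)) = mk2 P Q 0 0.
Proof.
apply/matrixP => i j; rewrite !mxE.
by case: i => [[|[|//]] Hi]; case: j => [[|[|//]] Hj].
Qed.
End Mat.

Section Poly.
Variable R : rcfType.

Lemma nrr_neq0 (p : {poly R}) : no_real_root p -> p != 0.
Proof. by move=> np; apply/eqP => p0; have := np 0; rewrite p0 root0. Qed.

Lemma nrr_mul (p q : {poly R}) : no_real_root p -> no_real_root q -> no_real_root (p * q).
Proof. by move=> np nq x; rewrite rootM negb_or np nq. Qed.

Lemma sq_pos (v : R) : v != 0 -> 0 < v * v.
Proof. by move=> v0; rewrite -expr2 lt0r sqrf_eq0 v0 sqr_ge0. Qed.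

Lemma sq_add_eq0 (u v : R) : u * u + v * v = 0 -> u = 0 /\ v = 0.
Proof.
move=> /eqP; rewrite -!expr2 paddr_eq0 ?sqr_ge0 // !sqrf_eq0 => /andP [/eqP -> /eqP ->].
by [].
Qed.

Lemma split_real (g : {poly R}) : g != 0 -> exists rs gc,
  [/\ gc != 0, no_real_root gc & g = \prod_(z <- rs) ('X - z%:P) * gc].
Proof.
move=> g0; have [n] := ubnP (size g); elim: n g g0 => // n IH g g0 Hs.
case: (classic (exists x, root g x)) => [[x rx]|nx].
- case/factor_theorem: rx => q Dq.
  have q0 : q != 0 by apply/eqP => q0; move: g0; rewrite Dq q0 mul0r eqxx.
  have Hq : (size q < n)%N.
    move: Hs; rewrite Dq size_mul // ?size_XsubC; last by rewrite -size_poly_eq0 size_XsubC.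
    move=> H; have e2 : (2%R : nat) = 2%N by []; rewrite e2 addn2 /= in H. by [].
  have [rs [gc [gc0 ngc Dq']]] := IH q q0 Hq.
  exists (x :: rs), gc; split => //.
  by rewrite Dq Dq' big_cons; ring.
- exists [::], g; split => //; last by rewrite big_nil mul1r.
  by move=> x; apply/negP => rx; apply: nx; exists x.
Qed.

Lemma hensel (rs : seq R) (F : {poly R}) : (forall z, z \in rs -> 0 < F.[z]) ->
  exists s m, s * s - F = m * \prod_(z <- rs) ('X - z%:P).
Proof.
elim: rs F => [|x rs IH] F HF.
  by exists 0, (- F); rewrite big_nil mul0r mulr1 sub0r.
have HF' : forall z, z \in rs -> 0 < F.[z] by move=> z zr; apply: HF; rewrite inE zr orbT.
have [s0 [m Hm]] := IH F HF'.
set G := \prod_(z <- rs) _ in Hm *.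
have Fx := HF x (mem_head x rs).
have EF : F = s0 * s0 - m * G by rewrite -Hm; ring.
have Ex : F.[x] = s0.[x] * s0.[x] - m.[x] * G.[x] by rewrite EF !hornerE.
have [c Hc] : exists c, m.[x] + 2%:R * c * s0.[x] + c * c * G.[x] = 0.
  have two0 : (2%:R : R) != 0 by rewrite pnatr_eq0.
  case: (eqVneq G.[x] 0) => G0.
  - have s0x : s0.[x] != 0.
      by apply/eqP => s0x; move: Fx; rewrite Ex s0x G0 !mulr0 subr0 ltxx.
    exists (- m.[x] / (2%:R * s0.[x])); rewrite G0 mulr0 addr0.
    field; exact: s0x.
  - have F0 : 0 <= F.[x] by apply: ltW.
    exists ((Num.sqrt F.[x] - s0.[x]) / G.[x]).
    have Hsq : Num.sqrt F.[x] * Num.sqrt F.[x] = F.[x] by rewrite -expr2 sqr_sqrtr.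
    apply: (mulIf G0); rewrite mul0r.
    have -> : (m.[x] + 2%:R * ((Num.sqrt F.[x] - s0.[x]) / G.[x]) * s0.[x] +
       (Num.sqrt F.[x] - s0.[x]) / G.[x] * ((Num.sqrt F.[x] - s0.[x]) / G.[x]) * G.[x]) * G.[x]
       = m.[x] * G.[x] - s0.[x] * s0.[x] + Num.sqrt F.[x] * Num.sqrt F.[x].
      by field.
    by rewrite Hsq Ex; ring.
set N := m + 2%:R * c%:P * s0 + c%:P * c%:P * G.
have rN : root N x by apply/rootP; rewrite /N !hornerE.
case/factor_theorem: rN => q Dq.
exists (s0 + c%:P * G), q; rewrite big_cons mulrA -Dq /N EF; rewrite -/G; ring.
Qed.

Lemma size_sq_add (t G : {poly R}) : G != 0 -> (size t < size G)%N ->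
  size (t * t + G * G) = size (G * G).
Proof.
move=> G0 lt; rewrite addrC size_addl //.
have sG : (0 < size G)%N by rewrite size_poly_gt0.
case: (eqVneq t 0) => [->|t0].
  rewrite mul0r size_poly0 size_mul // -subn1; set n := size G in sG *; lia.
have st : (0 < size t)%N by rewrite size_poly_gt0.
rewrite !size_mul // -!subn1; set n := size G in sG lt *; set k := size t in st lt *; lia.
Qed.


Lemma rdeg_size (f gp g gq : {poly R}) : f != 0 -> gp != 0 -> g != 0 -> gq != 0 ->
  (rdeg f gp <= rdeg g gq)%R -> (size f + size gq <= size g + size gp)%N.
Proof.
move=> f0 gp0 g0 gq0; rewrite /rdeg.
have := size_poly_gt0 f; have := size_poly_gt0 gp; have := size_poly_gt0 g;
have := size_poly_gt0 gq; rewrite f0 gp0 g0 gq0 -!subn1.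
set a := size f; set b := size gp; set c := size g; set d := size gq.
move=> *; lia.
Qed.

Lemma size_c (f gq M gp U gc Gr g : {poly R}) : f != 0 -> gq != 0 -> gp != 0 ->
  U != 0 -> gc != 0 -> Gr != 0 -> g = Gr * gc ->
  (size (Gr * M)%R <= size (gp * U)%R)%N -> (size f + size gq <= size g + size gp)%N ->
  (size (f * gq * M)%R <= size (gp * gp * U * gc)%R)%N.
Proof.
move=> f0 gq0 gp0 U0 gc0 Gr0 -> HM Hd.
case: (eqVneq M 0) => [->|M0]; first by rewrite mulr0 size_poly0.
move: HM Hd; rewrite !size_mul ?mulf_neq0 //.
have := size_poly_gt0 f; have := size_poly_gt0 gp; have := size_poly_gt0 gq;
have := size_poly_gt0 U; have := size_poly_gt0 gc; have := size_poly_gt0 Gr;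
have := size_poly_gt0 M; rewrite f0 gp0 gq0 U0 gc0 Gr0 M0 -!subn1.
set a := size f; set b := size gp; set c := size gq; set d := size U;
set e := size gc; set h := size Gr; set k := size M.
move=> *; lia.
Qed.

Lemma sign_pos (u v : R) : v != 0 -> 0 < u / v -> 0 < u * v.
Proof.
move=> v0 H; have -> : u * v = u / v * (v * v) by field.
by rewrite mulr_gt0 // sq_pos.
Qed.

Lemma frac_eq (a b c d : {poly R}) : b != 0 -> d != 0 -> a * d = c * b ->
  tofrac a / tofrac b = tofrac c / tofrac d.
Proof.
move=> b0 d0 H; apply/eqP; rewrite eqr_div ?tofrac_eq0 // -!tofracM H //.
Qed.

Lemma inD_frac (a b : {poly R}) : no_real_root b -> (size a <= size b)%N ->
  inD (tofrac a / tofrac b).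
Proof. move=> nb sab; exists a, b; split => //; exact: nrr_neq0. Qed.

Lemma core (f gp g gq : {poly R}) :
  gp != 0 -> no_real_root gp -> (size f <= size gp)%N ->
  gq != 0 -> no_real_root gq -> (size g <= size gq)%N ->
  f != 0 -> g != 0 -> (rdeg f gp <= rdeg g gq)%R ->
  ((forall z : R, root g z -> 0 < reval f gp z) \/
   (forall z : R, root g z -> reval f gp z < 0)) ->
  exists mu a b c : RX R, [/\ inD mu, inD a, inD b, inD c &
    [/\ b * c = a * (1 - a), mu * a = tofrac f / tofrac gp &
        mu * b = tofrac g / tofrac gq]].
Proof.
move=> gp0 ngp sfgp gq0 ngq sggq f0 g0 Hdeg Hsgn.
have Hd := rdeg_size f0 gp0 g0 gq0 Hdeg.
have gpx : forall z, gp.[z] != 0 by move=> z; have := ngp z; rewrite /root.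
have [sg [Hs1 Hsg]] : exists sg : R, sg * sg = 1 /\
    forall z, root g z -> 0 < sg * (f.[z] * gp.[z]).
  case: Hsgn => H; [exists 1 | exists (-1)]; split; try by rewrite ?mulr1 ?mulrNN ?mulr1.
  - by move=> z rz; rewrite mul1r; apply: sign_pos (gpx z) (H z rz).
  - move=> z rz; rewrite mulN1r -mulNr; apply: sign_pos (gpx z) _.
    by rewrite mulNr oppr_gt0; exact: H.
have sg0 : sg != 0 by apply/eqP => s0; move: Hs1; rewrite s0 mul0r => /eqP; rewrite eq_sym oner_eq0.
have [rs [gc [gc0 ngc Dg]]] := split_real g0.
set Gr := \prod_(z <- rs) ('X - z%:P) in Dg.
have Gr0 : Gr != 0 by apply/eqP => H; move: g0; rewrite Dg H mul0r eqxx.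
have rootGr : forall z, root Gr z -> root g z by move=> z rz; rewrite Dg rootM rz.
set F := sg%:P * f * gp.
have HF : forall z, z \in rs -> 0 < F.[z].
  move=> z zr; have rz : root g z by apply: rootGr; rewrite root_prod_XsubC.
  by rewrite /F !hornerE -mulrA; apply: Hsg.
have [s0 [m0 Hm0]] := hensel HF.
rewrite -/Gr in Hm0.
set s := s0 %% Gr; set k := s0 %/ Gr.
have Ds0 : s0 = k * Gr + s := divp_eq s0 Gr.
set m := m0 - k * (k * Gr + 2%:R * s).
have EF : F = s0 * s0 - m0 * Gr by rewrite -Hm0; ring.
have Hm : s * s - F = m * Gr by rewrite EF Ds0 /m; ring.
have ss : (size s < size Gr)%N by apply: ltn_modpN0.
set T : {poly R} := 'X * 'X + 1.
have nT : no_real_root T.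
  move=> x; rewrite /root /T !hornerE; apply/negP => /eqP H.
  have : 0 < x * x + 1 by apply: ltr_wpDl; [rewrite -expr2 sqr_ge0 | exact: ltr01].
  by rewrite H ltxx.
have T0 := nrr_neq0 nT.
have sT : size T = 3%N.
  rewrite /T size_addl size_mul ?polyX_eq0 ?size_polyX ?size_poly1 //.
set G := Gr * gp * T.
have G0 : G != 0 by rewrite !mulf_neq0.
have sG : size G = (size Gr + size gp + 1)%N.
  rewrite /G !size_mul ?mulf_neq0 // sT.
  have := size_poly_gt0 Gr; have := size_poly_gt0 gp; rewrite Gr0 gp0 -!subn1.
  set a := size Gr; set b := size gp; move=> *; lia.
set U := sg%:P * (s * s + G * G).
set W := gp * gp + G * G.
have sU : size U = size (G * G).
  rewrite /U size_Cmul // size_sq_add //; rewrite sG.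
  move: ss; set a := size s; set b := size Gr; move=> *; lia.
have sW : size W = size (G * G).
  rewrite /W size_sq_add // sG.
  have := size_poly_gt0 Gr; rewrite Gr0; set a := size Gr; set b := size gp; move=> *; lia.
have nU : no_real_root U.
  move=> x; apply/negP => /rootP.
  have -> : U.[x] = sg * (s.[x] * s.[x] + G.[x] * G.[x]) by rewrite /U hornerM hornerC hornerD !hornerM.
  move=> /eqP; rewrite mulf_eq0 (negbTE sg0) /= => /eqP H.
  have [sx Gx] := sq_add_eq0 H.
  have : G.[x] == 0 by rewrite Gx.
  rewrite /G !hornerM !mulf_eq0.
  have := gpx x; have := nT x; rewrite /root => /negbTE -> /negbTE -> /=; rewrite !orbF => /eqP Grx.
  have Fx : 0 < F.[x] by apply: HF; rewrite -root_prod_XsubC; apply/rootP; exact: Grx.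
  have := congr1 (fun p => p.[x]) Hm; rewrite /= !hornerE Grx sx !mulr0 sub0r.
  by move=> /eqP; rewrite oppr_eq0 => /eqP Fx0; move: Fx; rewrite /F !hornerE Fx0 ltxx.
have nW : no_real_root W.
  move=> x; apply/negP => /rootP.
  have -> : W.[x] = gp.[x] * gp.[x] + G.[x] * G.[x] by rewrite /W hornerD !hornerM.
  move=> H; have [gx _] := sq_add_eq0 H.
  by move: (gpx x); rewrite gx eqxx.
have U0 := nrr_neq0 nU; have W0 := nrr_neq0 nW.
set M := sg%:P * gp * m + (sg%:P * gp - f) * Gr * (gp * T) * (gp * T).
have Hsg2 : sg%:P * sg%:P = 1 :> {poly R} by rewrite -polyCM Hs1.
have Ess : s * s = m * Gr + F by rewrite -Hm; ring.
have HM : gp * U - f * W = Gr * M.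
  rewrite /U Ess /F /W /M /G.
  apply/eqP; rewrite -subr_eq0; apply/eqP.
  transitivity ((sg%:P * sg%:P - 1) * (f * gp * gp)); first by ring.
  by rewrite Hsg2 subrr mul0r.
have sfW : (size (f * W)%R <= size (gp * U)%R)%N.
  rewrite (size_mul f0 W0) (size_mul gp0 U0) sU sW; move: sfgp; set a := size f; set b := size gp; set c := size (G * G)%R; move=> *; lia.
clearbody M U W.
exists (tofrac U / tofrac W), (tofrac (f * W) / tofrac (gp * U)),
       (tofrac (g * W) / tofrac (gq * U)),
       (tofrac (f * gq * M) / tofrac (gp * gp * U * gc)).
split.
- by apply: inD_frac => //; rewrite sU sW.
- by apply: inD_frac => //; apply: nrr_mul.
- apply: inD_frac; first exact: nrr_mul.
  rewrite (size_mul g0 W0) (size_mul gq0 U0) sU sW; move: sggq; set a := size g; set b := size gq; set c := size (G * G)%R; move=> *; lia.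
- apply: inD_frac; first by apply: nrr_mul => //; apply: nrr_mul => //; apply: nrr_mul.
  apply: (size_c f0 gq0 gp0 U0 gc0 Gr0 Dg _ Hd).
  rewrite -HM (leq_trans (size_add _ _)) // size_opp geq_max leqnn //.
- split.
  + have gpU0 : gp * U != 0 by rewrite mulf_neq0.
    have -> : 1 - tofrac (f * W) / tofrac (gp * U) = tofrac (Gr * M) / tofrac (gp * U).
      have hF : tofrac (gp * U) != 0 by rewrite tofrac_eq0.
      by rewrite -{1}(divff hF) -mulrBl -tofracB HM.
    rewrite !mulf_div -!tofracM; apply: frac_eq; rewrite ?mulf_neq0 //.
    rewrite Dg; ring.
  + rewrite mulf_div -!tofracM; apply: frac_eq; rewrite ?mulf_neq0 //; ring.
  + rewrite mulf_div -!tofracM; apply: frac_eq; rewrite ?mulf_neq0 //; ring.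
Qed.

End Poly.

Unset Implicit Arguments.

Theorem theorem3p3 (R : rcfType) (f gp g gq : {poly R}) :
  gp != 0 -> no_real_root gp -> (size f <= size gp)%N ->
  gq != 0 -> no_real_root gq -> (size g <= size gq)%N ->
  f != 0 -> g != 0 ->
  ( ((rdeg g gq <= rdeg f gp)%R /\
      ((forall u : R, root f u -> 0 < reval g gq u) \/
       (forall u : R, root f u -> reval g gq u < 0)))
    \/
    ((rdeg f gp <= rdeg g gq)%R /\
      ((forall z : R, root g z -> 0 < reval f gp z) \/
       (forall z : R, root g z -> reval f gp z < 0))) ) ->
  prod_idem_D (\matrix_(i < 2, j < 2)
     (if i == 0 then (if j == 0 then tofrac f / tofrac gp
                      else tofrac g / tofrac gq) else 0)).
Proof.
move=> gp0 ngp sf gq0 ngq sg f0 g0 H; rewrite target_eq.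
case: H => [[Hd Hs]|[Hd Hs]].
- have [mu [a [b [c [Dm Da Db Dc [Ebc Ea Eb]]]]]] := core gq0 ngq sg gp0 ngp sf g0 f0 Hd Hs.
  have [_ H2] := assemble Dm Da Db Dc Ebc.
  by rewrite -Ea -Eb.
- have [mu [a [b [c [Dm Da Db Dc [Ebc Ea Eb]]]]]] := core gp0 ngp sf gq0 ngq sg f0 g0 Hd Hs.
  have [H1 _] := assemble Dm Da Db Dc Ebc.
  by rewrite -Ea -Eb.
Qed.
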